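(* Let $1\le p<q$ be integers (not necessarily coprime), and let $u=0^{q-p}1^{p}$. Then for every binary word $w\in\{0,1\}^q$ with exactly $p$ ones, $$\mathcal{S}_i(u)\le \mathcal{S}_i(w)\quad\text{for all } 1\le i\le q.$$ In other words, the orbit of $u$ is the greatest element of the set $\mathbb{W}_{p,q}$ of orbits with respect to the majorization order $\prec$.
   Context: Binary alphabet $\{0,1\}$ with $0<1$; words of equal length are compared lexicographically. For a word $x=x_1\cdots x_n$, $(x)_2=\sum_{i=1}^n x_i2^{n-i}$. The cyclic shift is $\sigma(w_1\cdots w_n)=w_2\cdots w_nw_1$. For $w\in\{0,1\}^q$, the orbit $\mathcal{O}(w)=(\mathcal{O}_1(w),\dots,\mathcal{O}_q(w))$ is the list of the $q$ words $w,\sigma(w),\dots,\sigma^{q-1}(w)$ arranged in lexicographic order from smallest to largest (with repetition), and the base-2 orbit is $\mathcal{I}(w)=(\mathcal{I}_1(w),\dots,\mathcal{I}_q(w))$ with $\mathcal{I}_k(w)=(\mathcal{O}_k(w))_2$. Partial sums: $\mathcal{S}_i(w)=\sum_{k=1}^i\mathcal{I}_k(w)$. $\mathbb{W}_{p,q}$ denotes the set of orbits (words up to cyclic shift) of binary words of length $q$ with $p$ ones. For orbits $w,w'$, $w'\prec w$ means $\mathcal{S}_i(w')\ge\mathcal{S}_i(w)$ for all $1\le i\le q$. *)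

(* Defs.v *)
(* Binary words are seq bool with false = 0 < true = 1. *)
From mathcomp Require Import all_boot.
Set Implicit Arguments. Unset Strict Implicit. Unset Printing Implicit Defensive.

Fixpoint lexle (x y : seq bool) : bool :=
  match x, y with
  | [::], _ => true
  | _ :: _, [::] => false
  | a :: x', b :: y' => (a < b) || ((a == b) && lexle x' y')
  end.

Definition val2 (x : seq bool) : nat := foldl (fun acc (b : bool) => acc.*2 + b) 0 x.

Definition sigma (w : seq bool) : seq bool := rot 1 w.

Definition orbit_words (w : seq bool) : seq (seq bool) :=
  sort lexle [seq iter k sigma w | k <- iota 0 (size w)].

Definition orbit_vals (w : seq bool) : seq nat := map val2 (orbit_words w).

Definition Spart (w : seq bool) (i : nat) : nat := \sum_(k <- take i (orbit_vals w)) k.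

Definition u_word (p q : nat) : seq bool := nseq (q - p) false ++ nseq p true.

(* Main.v *)
Require Import Defs.
From mathcomp Require Import all_boot zify.

Lemma val2_foldl a y : foldl (fun acc (b : bool) => acc.*2 + b) a y = a * 2 ^ size y + val2 y.
Proof.
elim: y a => [|b y IH] a /=; first by rewrite muln1 /val2 /= addn0.
rewrite /val2 /= !IH expnS; lia.
Qed.

Lemma val2_cons b y : val2 (b :: y) = b * 2 ^ size y + val2 y.
Proof. by rewrite {1}/val2 /= val2_foldl. Qed.

Lemma val2_cat x y : val2 (x ++ y) = val2 x * 2 ^ size y + val2 y.
Proof. by rewrite {1}/val2 foldl_cat val2_foldl. Qed.

Lemma val2_nil : val2 [::] = 0. Proof. by []. Qed.

Lemma val2_lt x : val2 x < 2 ^ size x.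
Proof.
elim: x => [|b x IH]; first by [].
rewrite val2_cons /= expnS; case: b => /=; lia.
Qed.

Lemma val2_nseq0 n : val2 (nseq n false) = 0.
Proof. by elim: n => [|n IH] //; rewrite /= val2_cons IH. Qed.

Lemma val2_nseq1 n : val2 (nseq n true) + 1 = 2 ^ n.
Proof. elim: n => [|n IH] //; rewrite /= val2_cons size_nseq expnS; lia. Qed.

Lemma val2_negb x : val2 (map negb x) + val2 x + 1 = 2 ^ size x.
Proof.
elim: x => [|b x IH] //; rewrite /= !val2_cons size_map expnS.
case: b => /=; lia.
Qed.
Definition rv (w : seq bool) (k : nat) : nat := val2 (rot k w).
Definition L (w : seq bool) : seq nat := map (rv w) (iota 0 (size w)).

Lemma rot_head (w : seq bool) k : k < size w ->
  rot k w = nth false w k :: (drop k.+1 w ++ take k w).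
Proof. by move=> hk; rewrite /rot (drop_nth false hk). Qed.

Lemma size_tail_rot (w : seq bool) k : k < size w -> size (drop k.+1 w ++ take k w) = (size w).-1.
Proof. move=> hk; rewrite size_cat size_drop size_take hk; lia. Qed.

Lemma rv_head (w : seq bool) k : k < size w ->
  rv w k = nth false w k * 2 ^ (size w).-1 + val2 (drop k.+1 w ++ take k w).
Proof. by move=> hk; rewrite /rv rot_head // val2_cons size_tail_rot. Qed.

Lemma rv_small (w : seq bool) k : k < size w -> (rv w k < 2 ^ (size w).-1) = ~~ nth false w k.
Proof.
move=> hk; rewrite rv_head //; have := val2_lt (drop k.+1 w ++ take k w).
rewrite size_tail_rot //; case: (nth false w k) => /=; lia.
Qed.

Lemma rv_double (w : seq bool) k : k < size w ->
  rv w k.+1 + nth false w k * 2 ^ size w = 2 * rv w k + nth false w k.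
Proof.
move=> hk; rewrite /rv (rotS hk) (rot_head w k hk) rot1_cons -cats1 val2_cat val2_cons /=.
rewrite val2_cons size_tail_rot // val2_nil.
have -> : 2 ^ size w = 2 * 2 ^ (size w).-1 by rewrite -expnS; congr (2 ^ _); lia.
case: (nth false w k) => /=; lia.
Qed.

Lemma size_L (w : seq bool) : size (L w) = size w.
Proof. by rewrite /L size_map size_iota. Qed.

Lemma nth_L (w : seq bool) k : k < size w -> nth 0 (L w) k = rv w k.
Proof. by move=> hk; rewrite /L (nth_map 0) ?size_iota // nth_iota. Qed.

Lemma count_nth (w : seq bool) : count id w = sumn (map (fun k => nat_of_bool (nth false w k)) (iota 0 (size w))).
Proof.
rewrite -sumn_count; congr sumn.
by rewrite -{1}(mkseq_nth false w) /mkseq -map_comp.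
Qed.

Lemma rv_size (w : seq bool) : rv w (size w) = rv w 0.
Proof. by rewrite /rv rot_size rot0. Qed.

Lemma sumn_map_add (s : seq nat) f g :
  sumn (map (fun k => f k + g k) s) = sumn (map f s) + sumn (map g s).
Proof. elim: s => //= a s ->; lia. Qed.

Lemma total_L (w : seq bool) : sumn (L w) = count id w * (2 ^ size w - 1).
Proof.
set n := size w.
have H1 : sumn (map (fun k => rv w k.+1 + nth false w k * 2 ^ n) (iota 0 n)) =
          sumn (map (fun k => 2 * rv w k + nth false w k) (iota 0 n)).
  congr sumn; apply/eq_in_map => k; rewrite mem_iota => /andP[_ hk].
  by apply: rv_double.
rewrite !sumn_map_add in H1.
have H2 : sumn (map (fun k => rv w k.+1) (iota 0 n)) = sumn (L w).
  clear H1; rewrite /L -/n; have := rv_size w; rewrite -/n; clearbody n.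
  case: n => [|n] // hrv.
  have -> : [seq rv w k.+1 | k <- iota 0 n.+1] = [seq rv w k | k <- iota 1 n.+1].
    by rewrite (iotaDl 1 0) -map_comp.
  have -> : iota 1 n.+1 = iota 1 n ++ [:: n.+1] by rewrite -[n.+1]addn1 iotaD /= addnC.
  by rewrite map_cat sumn_cat /= hrv addn0 addnC.
have H3 : sumn (map (fun k => nth false w k * 2 ^ n) (iota 0 n)) = count id w * 2 ^ n.
  rewrite count_nth -/n; elim: (iota 0 n) => //= a s ->; lia.
have H4 : sumn (map (fun k => 2 * rv w k) (iota 0 n)) = 2 * sumn (L w).
  rewrite /L -/n; elim: (iota 0 n) => //= a s ->; lia.
have H5 : sumn (map (fun k => nat_of_bool (nth false w k)) (iota 0 n)) = count id w by rewrite count_nth.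
rewrite H2 H3 H5 in H1.
have H0 : sumn [seq 0 | _ <- iota 0 n] = 0 by elim: (iota 0 n).
have E : sumn [seq rv w i | i <- iota 0 n] = sumn (L w) by [].
rewrite H0 E in H1.
have : 1 <= 2 ^ n by rewrite expn_gt0.
move: H1; rewrite mulnBr muln1; lia.
Qed.

Lemma iter_sigma (w : seq bool) k : k <= size w -> iter k sigma w = rot k w.
Proof.
elim: k => [|k IH] hk /=; first by rewrite rot0.
by rewrite IH ?(ltnW hk) // /sigma -rotD ?add1n.
Qed.

Lemma lexle_total : total lexle.
Proof.
elim=> [|a x IH] [|b y] //=; case: a; case: b => //=; rewrite ?orbF ?orbT //; exact: IH.
Qed.

Lemma lexle_val x y : size x = size y -> lexle x y -> val2 x <= val2 y.
Proof.
elim: x y => [|a x IH] [|b y] //= [hs] h.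
rewrite !val2_cons hs.
move: h; case: a; case: b => //= h.
- rewrite !mul1n leq_add2l; exact: IH.
- have := val2_lt x; rewrite hs; lia.
- rewrite !mul0n !add0n; exact: IH.
Qed.

Lemma sorted_map_val (s : seq (seq bool)) n :
  all (fun x => size x == n) s -> sorted lexle s -> sorted leq (map val2 s).
Proof.
case: s => [|x s] //=; elim: s x => [|y s IH] x //= /and3P[/eqP hx /eqP hy hs] /andP[hxy hp].
have -> : val2 x <= val2 y by apply: lexle_val => //; rewrite hx hy.
by apply: IH => //; rewrite hy eqxx hs.
Qed.

Definition Wrot (w : seq bool) := [seq iter k sigma w | k <- iota 0 (size w)].

Lemma Wrot_E (w : seq bool) : map val2 (Wrot w) = L w.
Proof.
rewrite /Wrot /L -map_comp; apply/eq_in_map => k; rewrite mem_iota => /andP[_ hk] /=.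
by rewrite iter_sigma ?(ltnW hk).
Qed.

Lemma orbit_perm (w : seq bool) : perm_eq (orbit_vals w) (L w).
Proof. by rewrite /orbit_vals /orbit_words -Wrot_E perm_map // perm_sort. Qed.

Lemma orbit_sorted (w : seq bool) : sorted leq (orbit_vals w).
Proof.
rewrite /orbit_vals /orbit_words; apply: (@sorted_map_val _ (size w)).
  apply/allP => x; rewrite mem_sort => /mapP[k]; rewrite mem_iota => /andP[_ hk] ->.
  by rewrite iter_sigma ?(ltnW hk) // size_rot.
exact: (sort_sorted lexle_total).
Qed.

Lemma Spart_E (w : seq bool) i : Spart w i = sumn (take i (orbit_vals w)).
Proof. by rewrite /Spart sumnE. Qed.

Lemma sorted_rem_nat (V : seq nat) a : sorted leq V -> sorted leq (rem a V).
Proof. move=> hV; apply: (subseq_sorted leq_trans (rem_subseq a V) hV). Qed.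

Lemma take_rem_le (V : seq nat) a i : sorted leq V -> a \in V -> 0 < i ->
  sumn (take i V) <= a + sumn (take i.-1 (rem a V)).
Proof.
elim: V i => [|b V IH] i //= hs; rewrite in_cons.
case: i => [|i] // ha _ /=.
case: (eqVneq b a) => [->|hba]; first by [].
have hb : all (leq b) V by apply: (order_path_min leq_trans hs).
have haV : a \in V by move: ha; rewrite eq_sym (negbTE hba).
have hba' : b <= a by move/allP: hb => /(_ a haV).
case: i => [|i] /=; first by rewrite take0 /=; lia.
have := IH i.+1 (path_sorted hs) haV isT; simpl; lia.
Qed.

Lemma min_sub (s t V : seq nat) : sorted leq V -> perm_eq V (s ++ t) ->
  sumn (take (size s) V) <= sumn s.
Proof.
elim: s V => [|a s IH] V hV hp /=; first by rewrite take0.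
have ha : a \in V by rewrite (perm_mem hp) in_cons eqxx.
apply: (leq_trans (@take_rem_le V a (size s).+1 hV ha isT)); rewrite /= leq_add2l.
apply: IH; first exact: sorted_rem_nat.
have := perm_to_rem ha; rewrite perm_sym => h.
by rewrite -(perm_cons a) (perm_trans h).
Qed.

Lemma mask_perm (m : bitseq) (l : seq nat) : size m = size l ->
  perm_eq l (mask m l ++ mask (map negb m) l).
Proof.
elim: l m => [|x l IH] [|b m] //= [hs].
case: b => /=; first by rewrite perm_cons IH.
apply/permP => P; move/permP: (IH m hs) => /(_ P); rewrite /= !count_cat /= => ->; lia.
Qed.

Lemma submask (s t l : seq nat) : perm_eq l (s ++ t) ->
  exists m : bitseq, size m = size l /\ perm_eq s (mask m l).
Proof.
move=> hp.
have : forall x, count_mem x s <= count_mem x l.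
  by move=> x; rewrite (permP hp) count_cat leq_addr.
by move/count_maskP => [m hm hpm]; exists m.
Qed.

Lemma sorted_take_small (V : seq nat) H : sorted leq V ->
  all (fun x => x < H) (take (count (fun x => x < H) V) V).
Proof.
elim: V => [|a V IH] //= hs.
have hV := path_sorted hs.
case: ltnP => ha /=; first by rewrite ha IH.
have hb : all (leq a) V by apply: (order_path_min leq_trans hs).
have -> : count (fun x => x < H) V = 0.
  apply/eqP; rewrite -leqn0 leqNgt -has_count; apply/hasPn => x hx.
  by move/allP: hb => /(_ x hx) h; rewrite -leqNgt (leq_trans ha h).
by [].
Qed.

Lemma sorted_drop_big (V : seq nat) H : sorted leq V ->
  all (fun x => H <= x) (drop (count (fun x => x < H) V) V).
Proof.
elim: V => [|a V IH] //= hs.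
have hV := path_sorted hs.
case: ltnP => ha /=; first by rewrite IH.
have hb : all (leq a) V by apply: (order_path_min leq_trans hs).
have -> : count (fun x => x < H) V = 0.
  apply/eqP; rewrite -leqn0 leqNgt -has_count; apply/hasPn => x hx.
  by move/allP: hb => /(_ x hx) h; rewrite -leqNgt (leq_trans ha h).
rewrite /= ha /=; apply/allP => x hx.
by move/allP: hb => /(_ x hx) h; rewrite (leq_trans ha h).
Qed.

Fixpoint disj (m w : seq bool) : bool :=
  match m, w with
  | a :: m', b :: w' => ~~ (a && b) && disj m' w'
  | _, _ => true
  end.

Lemma disj_cat (a b c d : seq bool) : size a = size c ->
  disj (a ++ b) (c ++ d) = disj a c && disj b d.
Proof. by elim: a c => [|x a IH] [|y c] //= [hs]; rewrite IH // andbA. Qed.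

Lemma disj_rot t (m w : seq bool) : size m = size w -> disj m w -> disj (rot t m) (rot t w).
Proof.
move=> hs hd; rewrite /rot disj_cat ?size_drop ?hs //.
move: hd; rewrite -{1}(cat_take_drop t m) -{1}(cat_take_drop t w) disj_cat;
  last by rewrite !size_take hs.
by case/andP => -> ->.
Qed.

Lemma disj_nth (m w : seq bool) k : disj m w -> nth false m k -> ~~ nth false w k.
Proof.
elim: m w k => [|a m IH] [|b w] [|k] //=.
- by case/andP; case: a; case: b.
- by case/andP => _ hd; apply: IH.
Qed.

Lemma nth_disj (m w : seq bool) : (forall k, nth false m k -> ~~ nth false w k) -> disj m w.
Proof.
elim: m w => [|a m IH] [|b w] //= h; apply/andP; split.
- by move: (h 0) => /=; case: (a); case: (b) => //= ->.
- by apply: IH => k; exact: (h k.+1).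
Qed.

Lemma disj_count (m w : seq bool) : size m = size w -> disj m w -> count id m <= count negb w.
Proof.
elim: m w => [|a m IH] [|b w] //= [hs] /andP[hab hd].
have := IH w hs hd; case: a hab; case: b => //=; lia.
Qed.

Lemma count_rot (T : Type) (a : pred T) t (s : seq T) : count a (rot t s) = count a s.
Proof. by rewrite /rot count_cat addnC -count_cat cat_take_drop. Qed.

Definition fsum (w m : seq bool) : nat := sumn (mask m (L w)).

Lemma nth_rot_gen (T : Type) (x0 : T) t (s : seq T) k : t <= size s -> k < size s ->
  nth x0 (rot t s) k = nth x0 s (if k + t < size s then k + t else k + t - size s).
Proof.
move=> ht hk; rewrite /rot nth_cat size_drop.
case: ifP => h1; case: ifP => h2.
- by rewrite nth_drop addnC.
- lia.
- lia.
- rewrite nth_take; last by lia.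
  congr nth; lia.
Qed.

Lemma L_rot t (w : seq bool) : t <= size w -> L (rot t w) = rot t (L w).
Proof.
move=> ht; apply: (@eq_from_nth _ 0); first by rewrite size_rot !size_L size_rot.
move=> k; rewrite size_L size_rot => hk.
rewrite nth_L ?size_rot // nth_rot_gen ?size_L // nth_L; last by case: ifP => h; lia.
rewrite /rv rot_add_mod ?(ltnW hk) //.
case: ifP => h1; case: ifP => h2 //.
- have -> : k + t = size w by lia.
  by rewrite rot_size subnn rot0.
- lia.
Qed.

Lemma fsum_rot t (w m : seq bool) : t <= size w -> size m = size w ->
  fsum (rot t w) (rot t m) = fsum w m.
Proof. by move=> ht hs; rewrite /fsum L_rot // mask_rot ?size_L // sumn_rot. Qed.

Definition Dsum (v m : seq bool) : nat :=
  sumn (mask m (map (fun k => 2 ^ k * val2 (drop k v)) (iota 0 (size v)))).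

Lemma sumn_mask_add (m : bitseq) (s : seq nat) f g :
  sumn (mask m (map (fun k => f k + g k) s)) = sumn (mask m (map f s)) + sumn (mask m (map g s)).
Proof. elim: s m => [|a s IH] [|c m] //=; case: c => /=; rewrite IH; lia. Qed.

Lemma L_snoc (v : seq bool) : L (v ++ [:: false]) =
  map (fun k => rv v k + 2 ^ k * val2 (drop k v)) (iota 0 (size v)) ++ [:: val2 v].
Proof.
rewrite /L size_cat addn1 -addn1 iotaD map_cat /=; congr (_ ++ _).
- apply/eq_in_map => k; rewrite mem_iota => /andP[_ hk].
  rewrite /rv /rot drop_cat take_cat hk -catA /= !val2_cat val2_cons /= size_takel; last by lia.
  rewrite expnS; lia.
- by rewrite add0n /rv rot_size_cat val2_cons /=.
Qed.

Lemma fsum_snoc (v m : seq bool) : size m = size v ->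
  fsum (v ++ [:: false]) (m ++ [:: true]) = fsum v m + Dsum v m + val2 v.
Proof.
move=> hs; rewrite /fsum L_snoc mask_cat ?size_map ?size_iota // sumn_cat /=.
by rewrite sumn_mask_add addn0.
Qed.

Lemma sumn_mask_mul2 (m : bitseq) (s : seq nat) f :
  sumn (mask m (map (fun k => 2 * f k) s)) = 2 * sumn (mask m (map f s)).
Proof. elim: s m => [|a s IH] [|c m] //=; case: c => /=; rewrite IH; lia. Qed.

Lemma Dsum_cons b (v : seq bool) c (m : seq bool) :
  Dsum (b :: v) (c :: m) = c * val2 (b :: v) + 2 * Dsum v m.
Proof.
rewrite /Dsum /= expn0 mul1n.
have -> : [seq 2 ^ k * val2 (drop k (b :: v)) | k <- iota 1 (size v)] =
          [seq 2 * (2 ^ k * val2 (drop k v)) | k <- iota 0 (size v)].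
  rewrite (iotaDl 1 0) -map_comp; apply/eq_in_map => k _ /=.
  by rewrite add1n expnS mulnA.
by case: c => /=; rewrite sumn_mask_mul2 ?mul1n ?mul0n.
Qed.

Lemma aux_zero (v : seq bool) j : j <= count negb v -> val2 v + 2 ^ j <= 2 ^ size v.
Proof.
elim: v j => [|b v IH] j /=; first by case: j.
rewrite val2_cons expnS; case: b => /= hj.
- have := IH j hj; lia.
- case: j hj => [|j] hj.
  + have := IH 0 isT; rewrite expn0; lia.
  + have := IH j hj; rewrite expnS; lia.
Qed.

Lemma key (v m : seq bool) : size m = size v -> disj m v ->
  (2 ^ count id v - 1) * 2 ^ count id m <= val2 v + Dsum v m.
Proof.
elim: v m => [|b v IH] [|c m] //= [hs] /andP[hcb hd].
rewrite Dsum_cons val2_cons.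
have IHv := IH m hs hd.
have hp : 1 <= 2 ^ count id v by rewrite expn_gt0.
case: b hcb => /=.
- rewrite andbT => /negbTE ->; rewrite /= mul0n add0n.
  have hz := @aux_zero v _ (@disj_count m v hs hd).
  move: IHv hz; rewrite add1n expnS; set P := 2 ^ count id v; set J := 2 ^ count id m.
  rewrite mulnBl mul1n mulnBl mul1n; rewrite -mulnA; nia.
- rewrite mul0n add0n add0n.
  case: c => /=.
  + rewrite mul1n expnS; nia.
  + rewrite mul0n add0n; nia.
Qed.

Lemma ML n : forall w m : seq bool, count id m = n -> size m = size w -> disj m w ->
  (2 ^ count id w - 1) * (2 ^ n - 1) <= fsum w m.
Proof.
elim: n => [|n IH] w m hc hs hd; first by rewrite muln0.
have : has id m by rewrite has_count hc.
case/(has_nthP false) => z hz hmz.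
have hwz : nth false w z = false by apply/negbTE; exact: (@disj_nth m w z hd hmz).
have hzw : z < size w by rewrite -hs.
have Ew : rot z.+1 w = (drop z.+1 w ++ take z w) ++ [:: false].
  by rewrite /rot (take_nth false hzw) hwz -cats1 catA.
have Em : rot z.+1 m = (drop z.+1 m ++ take z m) ++ [:: true].
  by rewrite /rot (take_nth false hz) hmz -cats1 catA.
set v := drop z.+1 w ++ take z w; set m' := drop z.+1 m ++ take z m.
have hsv : size m' = size v by rewrite /m' /v !size_cat !size_drop !size_take hs.
rewrite -(@fsum_rot z.+1 w m) // Ew Em fsum_snoc // -/v -/m'.
have hd1 := @disj_rot z.+1 m w hs hd; rewrite Ew Em disj_cat // andbT in hd1.
have hc1 : count id m' = n.
  have := @count_rot _ id z.+1 m; rewrite Em count_cat /= hc /m'; lia.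
have hcw : count id v = count id w.
  have := @count_rot _ id z.+1 w; rewrite Ew count_cat /= /v; lia.
have h1 := IH v m' hc1 hsv hd1.
have h2 := @key v m' hsv hd1.
rewrite hcw hc1 in h1 h2.
move: h1 h2; set P := 2 ^ count id w - 1; rewrite expnS.
have : 1 <= 2 ^ n by rewrite expn_gt0.
set J := 2 ^ n; nia.
Qed.

Lemma count_negb_w (w : seq bool) : count negb w = size w - count id w.
Proof. elim: w => //= b w IH; have := count_size id w; case: b => /=; lia. Qed.

Lemma cnt_small (w : seq bool) : count (fun x => x < 2 ^ (size w).-1) (L w) = count negb w.
Proof.
have -> : count negb w = count (fun k => ~~ nth false w k) (iota 0 (size w)).
  by rewrite -{1}(mkseq_nth false w) /mkseq count_map.
rewrite /L count_map.
apply: eq_in_count => k; rewrite mem_iota => /andP[_ hk] /=.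
by rewrite rv_small.
Qed.

Lemma mask_nth_mem (m : bitseq) (s : seq nat) k : k < size s -> nth false m k -> nth 0 s k \in mask m s.
Proof.
elim: s m k => [|x s IH] [|c m] [|k] //= hk.
- by move=> ->; rewrite /= mem_head.
- by move/(IH m k hk); case: c => //= h; rewrite in_cons h orbT.
Qed.

Lemma disj_from_small (w m : seq bool) : size m = size w ->
  all (fun x => x < 2 ^ (size w).-1) (mask m (L w)) -> disj m w.
Proof.
move=> hs /allP ha; apply: nth_disj => k hk.
have hkm : k < size m by rewrite ltnNge; apply/negP => h; move: hk; rewrite nth_default.
rewrite hs in hkm.
have := @mask_nth_mem m (L w) k; rewrite size_L nth_L // => /(_ hkm hk) /ha /=.
by rewrite rv_small.
Qed.

Lemma disj_from_big (w m : seq bool) : size m = size w ->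
  all (fun x => 2 ^ (size w).-1 <= x) (mask m (L w)) -> disj m (map negb w).
Proof.
move=> hs /allP ha; apply: nth_disj => k hk.
have hkm : k < size m by rewrite ltnNge; apply/negP => h; move: hk; rewrite nth_default.
rewrite hs in hkm.
have := @mask_nth_mem m (L w) k; rewrite size_L nth_L // => /(_ hkm hk) /ha /=.
by rewrite leqNgt rv_small // (nth_map false) // negbK => ->.
Qed.

Lemma rv_compl (w : seq bool) k : rv (map negb w) k + rv w k = 2 ^ size w - 1.
Proof.
rewrite /rv -map_rot; have := val2_negb (rot k w); rewrite size_rot; lia.
Qed.

Lemma sumn_mask_const (m : bitseq) (s : seq nat) C : size m = size s ->
  sumn (mask m (map (fun _ => C) s)) = count id m * C.
Proof. elim: s m => [|x s IH] [|c m] //= [hs]; case: c => /=; rewrite IH //; lia. Qed.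

Lemma fsum_compl (w m : seq bool) : size m = size w ->
  fsum (map negb w) m + fsum w m = count id m * (2 ^ size w - 1).
Proof.
move=> hs; rewrite /fsum /L size_map -sumn_mask_add.
have -> : [seq rv (map negb w) k + rv w k | k <- iota 0 (size w)] =
          [seq 2 ^ size w - 1 | _ <- iota 0 (size w)].
  by apply: eq_map => k; rewrite rv_compl.
by rewrite sumn_mask_const // size_iota.
Qed.

Lemma val2_nseq1' n : val2 (nseq n true) = 2 ^ n - 1.
Proof. have := val2_nseq1 n; lia. Qed.

Lemma rv_u_low p m k : k < m -> rv (nseq m false ++ nseq p true) k = (2 ^ p - 1) * 2 ^ k.
Proof.
move=> hk; rewrite /rv /rot drop_cat take_cat size_nseq hk drop_nseq take_nseq ?(ltnW hk) //.
by rewrite !val2_cat !val2_nseq0 val2_nseq1' !size_nseq /= mul0n add0n addn0.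
Qed.

Lemma rv_u_high p m a : a < p ->
  rv (nseq m false ++ nseq p true) (m + a) + (2 ^ m - 1) * 2 ^ a = 2 ^ (m + p) - 1.
Proof.
move=> ha; rewrite /rv /rot drop_cat take_cat size_nseq ltnNge leq_addr /=.
rewrite addKn drop_nseq take_nseq ?(ltnW ha) // !val2_cat val2_nseq0 !val2_nseq1' !size_cat !size_nseq.
have -> : m + p = (p - a) + (m + a) by lia.
rewrite !expnD.
have h1 : 1 <= 2 ^ (p - a) by rewrite expn_gt0.
have h2 : 1 <= 2 ^ m by rewrite expn_gt0.
have h3 : 1 <= 2 ^ a by rewrite expn_gt0.
move: h1 h2 h3; set A := 2 ^ (p - a); set Y := 2 ^ m; set X := 2 ^ a.
move=> h1 h2 h3; rewrite mul0n add0n.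
have e1 : (A - 1) * (Y * X) + (X - 1) + (Y - 1) * X + 1 = A * (Y * X).
  rewrite !mulnBl !mul1n; nia.
lia.
Qed.

Lemma sum_geo c i : sumn (map (fun k => c * 2 ^ k) (iota 0 i)) = c * (2 ^ i - 1).
Proof.
elim: i => [|i IH]; first by rewrite muln0.
rewrite -[i.+1]addn1 iotaD map_cat sumn_cat IH /= add0n addn0 expnD expn1.
have : 1 <= 2 ^ i by rewrite expn_gt0.
rewrite !mulnBr !muln1; nia.
Qed.

Lemma sum_high p m j : j <= p ->
  sumn (map (rv (nseq m false ++ nseq p true)) (iota m j)) + (2 ^ m - 1) * (2 ^ j - 1)
  = j * (2 ^ (m + p) - 1).
Proof.
elim: j => [|j IH] hj; first by rewrite muln0.
rewrite -[j.+1]addn1 iotaD map_cat sumn_cat /= addn0.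
have := @rv_u_high p m j hj; have := IH (ltnW hj).
set R := rv _ (m + j); set S := sumn _; set M := 2 ^ (m + p) - 1.
rewrite expnD expn1.
have : 1 <= 2 ^ j by rewrite expn_gt0.
set X := 2 ^ j; set Y := 2 ^ m - 1.
rewrite !mulnBr !muln1 mulnDl mul1n; nia.
Qed.

Theorem theorem4 (p q : nat) (w : seq bool) :
  1 <= p -> p < q -> size w = q -> count id w = p ->
  forall i, 1 <= i <= q -> Spart (u_word p q) i <= Spart w i.
Proof.
move=> hp hpq hw hcw i /andP[hi1 hiq].
have hu : size (u_word p q) = q by rewrite /u_word size_cat !size_nseq; lia.
have hcu : count id (u_word p q) = p by rewrite /u_word count_cat !count_nseq /=; lia.
rewrite !Spart_E.
set u := u_word p q.
set m := q - p.
have hqm : q = m + p by rewrite /m; lia.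
set V := orbit_vals w; set Vu := orbit_vals u.
have hVs := orbit_sorted w; have hVp := orbit_perm w.
have hVus := orbit_sorted u; have hVup := orbit_perm u.
have hsV : size V = q by rewrite (perm_size hVp) size_L.
have hsVu : size Vu = q by rewrite (perm_size hVup) size_L.
have hcV : count (fun x => x < 2 ^ (size w).-1) V = m.
  by rewrite (permP hVp) cnt_small count_negb_w hcw hw.
have hsumV : sumn V = p * (2 ^ q - 1) by rewrite (perm_sumn hVp) total_L hcw hw.
have hsumVu : sumn Vu = p * (2 ^ q - 1) by rewrite (perm_sumn hVup) total_L hcu hu.
case: (leqP i m) => him.
- have hA : (2 ^ p - 1) * (2 ^ i - 1) <= sumn (take i V).
    have hall : all (fun x => x < 2 ^ (size w).-1) (take i V).
      have := @sorted_take_small V (2 ^ (size w).-1) hVs; rewrite hcV => /allP h.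
      apply/allP => x hx; apply: h; rewrite -(take_takel V him) in hx; exact: mem_take hx.
    have hperm : perm_eq (L w) (take i V ++ drop i V) by rewrite cat_take_drop perm_sym.
    case: (@submask _ _ _ hperm) => mk [hmk hpm].
    have hsm : size mk = size w by rewrite hmk size_L.
    have hd : disj mk w by apply: disj_from_small => //; rewrite -(perm_all _ hpm).
    have hcm : count id mk = i by rewrite -(size_mask hmk) -(perm_size hpm) size_takel // hsV.
    have := @ML _ _ _ hcm hsm hd; rewrite hcw /fsum -(perm_sumn hpm) //.
  have hB : sumn (take i Vu) <= (2 ^ p - 1) * (2 ^ i - 1).
    have hperm : perm_eq Vu (take i (L u) ++ drop i (L u)) by rewrite cat_take_drop.
    have := @min_sub _ _ _ hVus hperm; rewrite size_takel ?size_L ?hu; last lia.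
    have -> : take i (L u) = map (fun k => (2 ^ p - 1) * 2 ^ k) (iota 0 i).
      rewrite /L -map_take take_iota hu; have -> : minn i q = i by lia.
      apply/eq_in_map => k; rewrite mem_iota => /andP[_ hk].
      by rewrite /u /u_word rv_u_low //; lia.
    by rewrite sum_geo.
  lia.
- have hall : all (fun x => 2 ^ (size w).-1 <= x) (drop i V).
    have := @sorted_drop_big V (2 ^ (size w).-1) hVs; rewrite hcV => /allP h.
    apply/allP => x hx; apply: h.
    rewrite -(subnK (ltnW him)) -drop_drop in hx; exact: mem_drop hx.
  have hperm : perm_eq (L w) (drop i V ++ take i V) by rewrite perm_sym perm_catC cat_take_drop.
  case: (@submask _ _ _ hperm) => mk [hmk hpm].
  have hsm : size mk = size w by rewrite hmk size_L.
  have hsm' : size mk = size (map negb w) by rewrite size_map.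
  have hd : disj mk (map negb w) by apply: disj_from_big => //; rewrite -(perm_all _ hpm).
  have hcm : count id mk = q - i by rewrite -(size_mask hmk) -(perm_size hpm) size_drop hsV.
  have hML := @ML _ _ _ hcm hsm' hd.
  have hcwb : count id (map negb w) = m by rewrite count_map -/(count negb w) count_negb_w hw hcw.
  rewrite hcwb in hML.
  have hcomp := @fsum_compl _ _ hsm; rewrite hcm hw in hcomp.
  have hsumw : sumn (drop i V) = fsum w mk by rewrite /fsum -(perm_sumn hpm).
  have htot : sumn (take i V) + sumn (drop i V) = p * (2 ^ q - 1) by rewrite -sumn_cat cat_take_drop.
  set A := map (rv u) (iota 0 m).
  set s := map (rv u) (iota m (q - i)).
  set D := map (rv u) (iota (m + (q - i)) (i - m)).
  have hLu : L u = A ++ s ++ D.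
    rewrite /L hu /A /s /D -!map_cat -iotaD -[iota m _]/(iota (0 + m) _) -iotaD.
    congr (map _ (iota _ _)); lia.
  have hperm2 : perm_eq Vu ((A ++ D) ++ s).
    apply: (perm_trans hVup); rewrite hLu; apply/permP => P; rewrite !count_cat; lia.
  have := @min_sub _ _ _ hVus hperm2; rewrite size_cat /A /D !size_map !size_iota.
  have -> : m + (i - m) = i by lia.
  rewrite -/A -/D => hmin.
  have htotu : sumn (take i Vu) + sumn (drop i Vu) = sumn A + sumn s + sumn D.
    by rewrite -sumn_cat cat_take_drop (perm_sumn hVup) hLu !sumn_cat addnA.
  have hs := @sum_high p m (q - i) ltac:(lia).
  rewrite -/s -hqm in hs.
  rewrite sumn_cat -/Vu in hmin.
  have htu : sumn A + sumn s + sumn D = p * (2 ^ q - 1).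
    by rewrite -hsumVu (perm_sumn hVup) hLu !sumn_cat addnA.
  lia.
Qed.
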